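(* Let $\mathcal H$ be a Heisenberg $p$-group with centre $\mathcal Z$ and let $\alpha$ be an automorphism of $\mathcal H$ of order two whose restriction to $\mathcal Z$ is not the identity; let $\mathcal H^+_\alpha=\{h\in\mathcal H:\alpha(h)=h\}$. Then $\mathcal H^+_\alpha\,\alpha(h)\,\mathcal H^+_\alpha=\mathcal H^+_\alpha\,h^{-1}\,\mathcal H^+_\alpha$ for all $h\in\mathcal H$, and consequently $(\mathcal H,\mathcal H^+_\alpha)$ is a Gelfand pair: for every irreducible representation $\rho$ of $\mathcal H$, $\dim\operatorname{Hom}_{\mathcal H^+_\alpha}(\rho,1)\le1$.
   Context: $p$ is an odd prime. A Heisenberg $p$-group is a group isomorphic to $W\boxtimes C$, where $C$ is cyclic of order $p$, $W$ is a finite $\mathbb F_p$-vector space with a nondegenerate alternating biadditive $C$-valued form $\langle\,,\rangle$, and $W\boxtimes C$ is $W\times C$ with multiplication $(w_1,z_1)(w_2,z_2)=(w_1+w_2,z_1+z_2+\tfrac12\langle w_1,w_2\rangle)$. *)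

(* Defs.v *)
From HB Require Import structures.
From mathcomp Require Import all_boot all_order all_algebra all_fingroup all_solvable all_field all_character.
Set Implicit Arguments. Unset Strict Implicit. Unset Printing Implicit Defensive.
Import GRing.Theory.

(* The concrete model W ⊠ C with W = 'rV['F_p]_n and C = 'F_p (additive). *)
Section Heis.
Variables (p n : nat).
Local Open Scope ring_scope.

Definition alt_nondeg_form (B : 'rV['F_p]_n -> 'rV['F_p]_n -> 'F_p) : Prop :=
  [/\ (forall u v w, B (u + v) w = B u w + B v w),
      (forall u v w, B u (v + w) = B u v + B u w),
      (forall w, B w w = 0)
    & (forall w, (forall v, B w v = 0) -> w = 0)].

Definition heis_mul (B : 'rV['F_p]_n -> 'rV['F_p]_n -> 'F_p)
  (x y : 'rV['F_p]_n * 'F_p) : 'rV['F_p]_n * 'F_p :=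
  (x.1 + y.1, x.2 + y.2 + (2%:R)^-1 * B x.1 y.1).
End Heis.

Definition heisenberg_group (p : nat) (gT : finGroupType) (G : {set gT}) : Prop :=
  [/\ prime p, odd p &
    exists n (B : 'rV['F_p]_n -> 'rV['F_p]_n -> 'F_p),
      alt_nondeg_form B /\
      exists f : 'rV['F_p]_n * 'F_p -> gT,
        [/\ injective f, f @: setT = G &
            forall x y, f (heis_mul B x y) = (f x * f y)%g]].

(* dim Hom_H(rho, 1): the space of linear functionals c (column vectors) with
   rG h *m c = c for all h in H, encoded as row vectors u = c^T satisfying
   u *m ((rG h)^T - 1) = 0. *)
Definition dim_hom_triv (gT : finGroupType) (G : {group gT}) (d : nat)
  (rG : mx_representation algC G d) (H : {set gT}) : nat :=
  \rank (\bigcap_(h in H) kermx ((rG h)^T - 1%:M))%MS.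

(* Main.v *)
Require Import Defs.
From mathcomp Require Import all_boot all_order all_algebra all_fingroup all_solvable all_field all_character.
Set Implicit Arguments. Unset Strict Implicit. Unset Printing Implicit Defensive.
Import GRing.Theory Num.Theory.

Section Polar.
Variables (gT : finGroupType) (G : {group gT}) (a : {perm gT}).
Hypotheses (AutGa : a \in Aut G) (oa : #[a]%g = 2) (oddG : odd #|G|).
Local Open Scope group_scope.

Let f := autm AutGa.
Lemma aG x : x \in G -> a x \in G. Proof. exact: Aut_closed. Qed.
Lemma aM x y : x \in G -> y \in G -> a (x * y) = a x * a y.
Proof. by move=> Gx Gy; rewrite -!(autmE AutGa) morphM. Qed.
Lemma aV x : x \in G -> a x^-1 = (a x)^-1.
Proof. by move=> Gx; rewrite -!(autmE AutGa) morphV. Qed.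
Lemma aX x n : x \in G -> a (x ^+ n) = (a x) ^+ n.
Proof. by move=> Gx; rewrite -!(autmE AutGa) morphX. Qed.
Lemma aa x : a (a x) = x.
Proof. by rewrite -permM -[a * a]/(a ^+ 2) -oa expg_order perm1. Qed.

Definition Hp := [set h in G | a h == h].

Lemma Hp_group : group_set Hp.
Proof.
apply/group_setP. split.
  by rewrite inE group1 /= -(autmE AutGa) morph1.
move=> x y; rewrite !inE => /andP[Gx /eqP ax] /andP[Gy /eqP ay].
by rewrite (groupM Gx Gy) (aM Gx Gy) ax ay eqxx.
Qed.

Lemma polar g : g \in G -> exists2 u, u \in Hp & a g = u * g^-1 * u.
Proof.
move=> Gg; set w := (a g)^-1 * g.
have Gw : w \in G by rewrite groupM ?groupV ?aG.
have aw : a w = w^-1 by rewrite aM ?groupV ?aG // aV ?aG // aa invMg invgK.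
have ow : odd #[w] by apply: (dvdn_odd (order_dvdG Gw)).
set k := (#[w]).+1./2.
set v := w ^+ k.
have v2 : v * v = w.
  rewrite -expgD addnn halfK /= ow /= subn0 expgS expg_order mulg1 //.
have Gv : v \in G by rewrite groupX.
have av : a v = v^-1 by rewrite /v aX // aw expgVn.
exists (g * v^-1).
  rewrite inE groupM ?groupV //= aM ?groupV // aV // av invgK.
  have e : a g = g * (v * v)^-1 by rewrite v2 /w invMg invgK mulgA mulgV mul1g.
  by rewrite e invMg mulgA mulgKV.
by rewrite !mulgA mulgKV -mulgA -invMg v2 /w invMg invgK mulgA mulgV mul1g.
Qed.
End Polar.
Section Part1.
Variables (gT : finGroupType) (G : {group gT}) (a : {perm gT}).
Hypotheses (AutGa : a \in Aut G) (oa : #[a]%g = 2) (oddG : odd #|G|).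
Local Open Scope group_scope.

Lemma part1 h : h \in G ->
  (Hp G a :* a h) * Hp G a = (Hp G a :* h^-1) * Hp G a.
Proof.
move=> Gh; have [u Hu ->] := polar AutGa oa oddG Gh.
pose H := Group (Hp_group AutGa).
change (Hp G a) with (gval H) in Hu |- *.
by rewrite !rcosetM (rcoset_id Hu) -mulgA (lcoset_id Hu).
Qed.
End Part1.
Section Gelfand.
Variables (gT : finGroupType) (G : {group gT}) (a : {perm gT}).
Hypotheses (AutGa : a \in Aut G) (oa : #[a]%g = 2) (oddG : odd #|G|).
Variables (d : nat) (rG : mx_representation algC G d).
Local Open Scope ring_scope.

Let HG := Group (Hp_group AutGa).
Let HGE : gval HG = Hp G a. Proof. by []. Qed.
Lemma HpG x : x \in Hp G a -> x \in G. Proof. by rewrite inE => /andP[]. Qed.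

Lemma sum_reindex (V : nmodType) (A : {set gT}) (phi : gT -> gT) (F : gT -> V) :
  injective phi -> (forall x, (phi x \in A) = (x \in A)) ->
  \sum_(x in A) F (phi x) = \sum_(x in A) F x.
Proof.
move=> iphi memA; rewrite [RHS](reindex_inj iphi) /=.
by apply: eq_bigl => x; rewrite memA.
Qed.

Definition N : algC := (#|Hp G a|)%:R.
Definition P : 'M[algC]_d := N^-1 *: \sum_(h in Hp G a) rG h.

Lemma N_neq0 : N != 0.
Proof.
rewrite /N pnatr_eq0 -lt0n; apply/card_gt0P; exists 1%g.
by rewrite -HGE group1.
Qed.

Lemma PrG h : h \in Hp G a -> P *m rG h = P.
Proof.
move=> Hh; rewrite /P -scalemxAl mulmx_suml; congr (_ *: _).
rewrite -(@sum_reindex _ _ (fun k => (k * h)%g) rG (mulIg h)); last first.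
  by move=> x; rewrite -!HGE groupMr.
by apply: eq_bigr => k Hk; rewrite repr_mxM ?HpG.
Qed.

Lemma rGP h : h \in Hp G a -> rG h *m P = P.
Proof.
move=> Hh; rewrite /P -scalemxAr mulmx_sumr; congr (_ *: _).
rewrite -(@sum_reindex _ _ (fun k => (h * k)%g) rG (mulgI h)); last first.
  by move=> x; rewrite -!HGE groupMl.
by apply: eq_bigr => k Hk; rewrite repr_mxM ?HpG.
Qed.

Lemma PP : P *m P = P.
Proof.
rewrite {1}/P -scalemxAr mulmx_sumr (eq_bigr (fun _ => P)); last by move=> h Hh; rewrite PrG.
by rewrite sumr_const -scaler_nat scalerA mulVf ?N_neq0 ?scale1r.
Qed.

Definition Q x := P *m rG x *m P.

Lemma Q_bi u x v : u \in Hp G a -> x \in G -> v \in Hp G a ->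
  Q (u * x * v)%g = Q x.
Proof.
move=> Hu Gx Hv; have Gu := HpG Hu; have Gv := HpG Hv.
rewrite /Q !repr_mxM ?groupM // !mulmxA PrG // -!mulmxA rGP //.
Qed.

Lemma Q_theta x : x \in G -> Q ((a x)^-1)%g = Q x.
Proof.
move=> Gx; have [u Hu ->] := polar AutGa oa oddG Gx.
rewrite !invMg invgK mulgA; apply: Q_bi => //; rewrite -HGE groupV //.
Qed.

Lemma PrGP g k : g \in G -> k \in G ->
  P *m rG g *m P *m rG k *m P = N^-1 *: \sum_(h in Hp G a) Q (g * h * k)%g.
Proof.
move=> Gg Gk.
have -> : P *m rG g *m P *m rG k *m P = (P *m rG g) *m P *m (rG k *m P).
  by rewrite !mulmxA.
rewrite {2}/P -scalemxAr -scalemxAl; congr (_ *: _).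
rewrite mulmx_sumr mulmx_suml; apply: eq_bigr => h Hh.
have Gh := HpG Hh; by rewrite /Q !repr_mxM ?groupM // !mulmxA.
Qed.

Lemma Q_comm g k : g \in G -> k \in G -> Q g *m Q k = Q k *m Q g.
Proof.
move=> Gg Gk.
have E x y : x \in G -> y \in G -> Q x *m Q y = P *m rG x *m P *m rG y *m P.
  by move=> _ _; rewrite /Q -!mulmxA (mulmxA P P) PP.
rewrite E // E // PrGP // PrGP //; congr (_ *: _).
have [u Hu eu] := polar AutGa oa oddG Gk.
have [v Hv ev] := polar AutGa oa oddG Gg.
have Gu := HpG Hu; have Gv := HpG Hv.
rewrite -(@sum_reindex _ _ (fun h => u^-1 * h^-1 * v^-1)%g (fun h => Q (k * h * g)%g)); last first.
- by move=> x; rewrite -!HGE groupMr ?groupV // groupMl ?groupV // groupV.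
- by move=> x y /mulIg /mulgI /invg_inj.
apply: eq_bigr => h Hh; have Gh := HpG Hh.
have ah : a h = h by move: Hh; rewrite inE => /andP[_ /eqP].
rewrite -Q_theta ?groupM // (aM AutGa) ?groupM // (aM AutGa) // eu ev ah.
rewrite !invMg !invgK !mulgA.
have -> : (u^-1 * k * u^-1 * h^-1 * v^-1 * g * v^-1 =
   u^-1 * (k * u^-1 * h^-1 * v^-1 * g) * v^-1)%g by rewrite !mulgA.
rewrite Q_bi ?groupM ?groupV // -HGE groupV //.
Qed.

Lemma PXP_comm X Y :
  (X \in enveloping_algebra_mx rG)%MS -> (Y \in enveloping_algebra_mx rG)%MS ->
  P *m X *m P *m (P *m Y *m P) = P *m Y *m P *m (P *m X *m P).
Proof.
case/envelop_mxP => al ->; case/envelop_mxP => be ->.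
have L c : P *m (\sum_(x in G) c x *: rG x) *m P = \sum_(x in G) c x *: Q x.
  rewrite mulmx_sumr mulmx_suml; apply: eq_bigr => x _.
  by rewrite -(scalemxAr (c x) P (rG x)) -(scalemxAl (c x) (P *m rG x) P).
have M (c1 c2 : gT -> algC) : (\sum_(x in G) c1 x *: Q x) *m (\sum_(y in G) c2 y *: Q y)
   = \sum_(x in G) \sum_(y in G) (c1 x * c2 y) *: (Q x *m Q y).
  rewrite mulmx_suml; apply: eq_bigr => x _; rewrite mulmx_sumr; apply: eq_bigr => y _.
  by rewrite -scalemxAl -scalemxAr scalerA.
rewrite !L !M exchange_big; apply: eq_bigr => y Gy; apply: eq_bigr => x Gx.
by rewrite mulrC Q_comm.
Qed.

Lemma Pfix (c : 'cV[algC]_d) :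
  (forall h, h \in Hp G a -> rG h *m c = c) -> P *m c = c.
Proof.
move=> fc; rewrite /P -scalemxAl mulmx_suml (eq_bigr (fun _ => c)); last by move=> h /fc.
by rewrite sumr_const -scaler_nat scalerA mulVf ?N_neq0 ?scale1r.
Qed.

Lemma final : mx_irreducible rG -> (dim_hom_triv rG (Hp G a) <= 1)%N.
Proof.
move=> irr; have := @group_closure_closed_field algC gT G d rG irr.
case/andP => _ fullE.
have comm X Y := PXP_comm (submx_full (mxvec X) fullE) (submx_full (mxvec Y) fullE).
rewrite /dim_hom_triv; set U := (\bigcap_(h in Hp G a) _)%MS.
have fixU u : (u <= U)%MS -> forall h, h \in Hp G a -> rG h *m u^T = u^T.
  move=> uU h Hh; move/sub_bigcapmxP: uU => /(_ h Hh) /sub_kermxP.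
  rewrite mulmxBr mulmx1 => /eqP; rewrite subr_eq0 => /eqP e.
  by rewrite -[rG h]trmxK -trmx_mul e.
have [->|nzU] := eqVneq U 0; first by rewrite mxrank0.
set u0 := nz_row U.
have u0U : (u0 <= U)%MS := nz_row_sub U.
have u0nz : u0 != 0 by rewrite nz_row_eq0.
have [i ui] : exists i, u0 0 i != 0.
  apply/existsP; apply: contraR u0nz => /existsPn H; apply/eqP/rowP => i.
  by rewrite mxE; apply/eqP; move: (H i); rewrite negbK.
pose s : 'cV[algC]_d := (u0 0 i)^-1 *: delta_mx i 0.
have us : u0 *m s = 1%:M.
  rewrite /s -scalemxAr -colE; apply/matrixP => x y.
  by rewrite !ord1 !mxE eqxx mulVf.
pose r := s^T.
have key (u : 'rV[algC]_d) : (u <= U)%MS -> (u <= u0)%MS.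
  move=> uU; set c := u^T; set c0 := u0^T.
  have Pc : P *m c = c by apply: Pfix; apply: fixU.
  have Pc0 : P *m c0 = c0 by apply: Pfix; apply: fixU.
  set R := r *m P.
  have Rc0 : R *m c0 = 1%:M by rewrite /R -mulmxA Pc0 /r /c0 -trmx_mul us trmx1.
  have E1 : P *m (c *m r) *m P = c *m R by rewrite mulmxA Pc -mulmxA.
  have E2 : P *m (c0 *m r) *m P = c0 *m R by rewrite mulmxA Pc0 -mulmxA.
  have := comm (c *m r) (c0 *m r); rewrite E1 E2 => e.
  have : c *m R *m (c0 *m R) *m c0 = c0 *m R *m (c *m R) *m c0 by rewrite e.
  have rc0 : r *m c0 = 1%:M by rewrite /r /c0 -trmx_mul us trmx1.
  rewrite -!mulmxA !(Pc0, rc0, mulmx1) Pc.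
  move=> ec; have -> : u = (c0 *m (r *m c))^T by rewrite -ec /c trmxK.
  by rewrite trmx_mul trmxK submxMl.
apply: leq_trans (rank_leq_row u0); apply: mxrankS.
by apply/row_subP => j; apply: key; rewrite row_sub.
Qed.
End Gelfand.

Theorem theorem2p39 (p : nat) (gT : finGroupType) (G : {group gT})
  (a : {perm gT}) :
  heisenberg_group p G ->
  a \in Aut G -> #[a]%g = 2 ->
  (exists2 z, z \in ('Z(G))%g & a z != z) ->
  let Hp := [set h in G | a h == h] in
  (forall h, h \in G -> (Hp :* a h) * Hp = (Hp :* h^-1) * Hp)%g /\
  (forall (d : nat) (rG : mx_representation algC G d),
      mx_irreducible rG -> (dim_hom_triv rG Hp <= 1)%N).
Proof.
move=> [pp op [n [B [_ [f [injf imf _]]]]]] AutGa oa _ Hp.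
have oddG : odd #|G|.
  rewrite -imf card_imset // cardsT card_prod card_mx card_Fp //.
  by rewrite oddM oddX op orbT.
split; first exact: part1.
by move=> d rG; apply: final.
Qed.
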